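(* Let $K\le M$, $S\ge 1$, $\sigma^2>0$, and $\mathrm{EVM}\in(0,1]$. For $\nu=0,\ldots,S-1$ let $\bar{\mathbf{H}}[\nu]\in\mathbb{C}^{M\times K}$ have rank $K$. For $\rho>0$ define $$R_{\Sigma}(\rho)=\frac{1}{S}\sum_{\nu=0}^{S-1}\log_2\det\left(\mathbf{I}_M+\frac{\rho}{\sigma^2}\bar{\mathbf{H}}[\nu]\bar{\mathbf{H}}^{\mathrm{H}}[\nu]\right)-\frac{1}{S}\sum_{\nu=0}^{S-1}\log_2\det\left(\mathbf{I}_M+\frac{\rho\,\mathrm{EVM}^2}{\sigma^2}\bar{\mathbf{H}}[\nu]\bar{\mathbf{H}}^{\mathrm{H}}[\nu]\right).$$ Then $$\lim_{\rho\to\infty}R_{\Sigma}(\rho)=K\log_2\left(\frac{1}{\mathrm{EVM}^2}\right).$$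
   Context: $(\cdot)^{\mathrm{H}}$ denotes conjugate transpose and $\mathbf{I}_M$ the $M\times M$ identity matrix. In the paper, $R_\Sigma$ is the achievable uplink average sum rate of a multi-user MIMO OFDM system with $K$ users, $M$ base-station antennas, $S$ subcarriers, channel matrices $\bar{\mathbf{H}}[\nu]$, transmit power $\rho$, noise variance $\sigma^2$ and user hardware error vector magnitude $\mathrm{EVM}$. *)

(* Defs.v *)
From HB Require Import structures.
From mathcomp Require Import all_boot all_order all_algebra.
From mathcomp Require Import all_classical all_reals all_analysis.
From mathcomp Require Import complex.
Set Implicit Arguments. Unset Strict Implicit. Unset Printing Implicit Defensive.
Import Order.TTheory GRing.Theory Num.Theory.
Import numFieldNormedType.Exports.
Local Open Scope ring_scope.

Definition ctrmx (R : rcfType) (m n : nat) (A : 'M[R[i]]_(m, n)) : 'M[R[i]]_(n, m) :=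
  (map_mx (@conjc R) A)^T.

Definition log2 (R : realType) (x : R) : R := ln x / ln 2.

(* log2 det (I_M + c H H^H); the determinant of this Hermitian positive
   definite matrix is a positive real number, we take its real part. *)
Definition log2det (R : realType) (M K : nat) (c : R) (H : 'M[R[i]]_(M, K)) : R :=
  log2 (complex.Re (\det (1%:M + (c%:C)%C *: (H *m ctrmx H)))).

Definition sum_rate (R : realType) (M K S : nat) (H : 'I_S -> 'M[R[i]]_(M, K))
  (sigma2 EVM rho : R) : R :=
  S%:R^-1 * (\sum_(nu < S) log2det (rho / sigma2) (H nu))
  - S%:R^-1 * (\sum_(nu < S) log2det (rho * EVM ^+ 2 / sigma2) (H nu)).

(* Main.v *)
Require Import Defs.
From HB Require Import structures.
From mathcomp Require Import all_boot all_order all_algebra.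
From mathcomp Require Import all_classical all_reals all_analysis.
From mathcomp Require Import complex.
Import Order.TTheory GRing.Theory Num.Theory.
Import numFieldNormedType.Exports.
Local Open Scope classical_set_scope.
Local Open Scope ring_scope.

From mathcomp Require Import ring.
Set Implicit Arguments. Unset Strict Implicit. Unset Printing Implicit Defensive.

Section MxPart.
Local Open Scope sesquilinear_scope.
Lemma sylvester (R : comNzRingType) m n (A : 'M[R]_(m, n)) (B : 'M[R]_(n, m)) :
  \det (1%:M + A *m B) = \det (1%:M + B *m A).
Proof.
pose X := block_mx 1%:M (- A) B 1%:M.
pose U := block_mx 1%:M A 0 1%:M.
have dU : \det U = 1 by rewrite det_ublock !det1 mulr1.
have e1 : U *m X = block_mx (1%:M + A *m B) 0 B 1%:M.
  by rewrite mulmx_block ?mul1mx ?mul0mx ?mulmx1 ?add0r ?addr0 addNr.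
have e2 : X *m U = block_mx 1%:M 0 B (1%:M + B *m A).
  by rewrite mulmx_block ?mul1mx ?mul0mx ?mulmx1 ?add0r ?addr0 mulNmx mulmx0 oppr0 addr0 subrr addrC.
have := congr1 determinant e1; have := congr1 determinant e2.
rewrite !det_mulmx !det_lblock !det1 dU mul1r mulr1 => <- <-.
by rewrite mulrC.
Qed.

Lemma gram_det (R : rcfType) m k (H : 'M[R[i]]_(m,k)) : \rank H = k ->
  exists r : 'I_k -> R, (forall j, 0 < r j) /\
   forall c : R, \det (1%:M + (c%:C)%C *: (H *m ctrmx H)) = ((\prod_j (1 + c * r j))%:C)%C.
Proof.
move=> rH.
have HsE : ctrmx H = H ^t* by rewrite /ctrmx map_trmx.
set Hs := ctrmx H in HsE *.
set G := Hs *m H.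
have GG : G ^t* = G.
  by rewrite /G trmx_mul map_mxM HsE trmxCK.
have Gn : G \is normalmx by apply/normalmxP; rewrite GG.
have GE := orthomx_spectralP Gn.
set P := spectralmx G in GE; set d := spectral_diag G in GE.
have Pu : P \is unitarymx := spectral_unitarymx G.
have Pi : P \in unitmx := spectral_unit G.
have dE : diag_mx d = P *m G *m P^t*.
  rewrite GE -invmx_unitary // !mulmxA mulmxV // mul1mx mulmxK //.
set X := H *m P^t*.
have dE2 : diag_mx d = X^t* *m X.
  by rewrite dE /X trmx_mul map_mxM trmxCK -HsE !mulmxA.
have dii j : d 0 j = \sum_l `|X l j| ^+ 2.
  have := congr1 (fun A : 'M[R[i]]_k => A j j) dE2; rewrite /= !mxE eqxx mulr1n => ->.
  by apply: eq_bigr => l _; rewrite !mxE sqr_normc mulrC.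
have dpos j : 0 < d 0 j.
  rewrite lt0r dii sumr_ge0 ?andbT; last by move=> l _; rewrite exprn_ge0.
  apply/negP => /eqP /psumr_eq0P H0.
  have Xz : row j X^T = 0.
    apply/rowP => l; rewrite !mxE.
    have := H0 (fun i _ => exprn_ge0 2 (normr_ge0 (X i j))) l isT; rewrite /= => /eqP; rewrite sqrf_eq0 normr_eq0 => /eqP XE.
    by move: XE; rewrite /X mxE.
  have rX : row_free X^T.
    by rewrite /row_free mxrank_tr /X mxrankMfree ?rH // /row_free mxrank_unitary ?trmxC_unitary.
  move: Xz; rewrite rowE => /eqP; rewrite mulmx_free_eq0 // => /eqP /matrixP /(_ 0 j).
  by rewrite !mxE !eqxx /= => /eqP; rewrite oner_eq0.
have dR j : d 0 j = ((complex.Re (d 0 j))%:C)%C /\ 0 < complex.Re (d 0 j).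
  have := dpos j; rewrite ltcE /=; case: (d 0 j) => a b /= /andP [/eqP -> ->].
  by split.
exists (fun j => complex.Re (d 0 j)); split; first by move=> j; case: (dR j).
move=> c.
rewrite scalemxAr sylvester -scalemxAl -/G.
have -> : 1%:M + (c%:C)%C *: G = invmx P *m (1%:M + (c%:C)%C *: diag_mx d) *m P.
  by rewrite mulmxDr mulmxDl mulmx1 mulVmx // -scalemxAr -scalemxAl -GE.
rewrite !det_mulmx det_inv mulrC mulrA mulfV; last by rewrite -unitfE -unitmxE.
rewrite mul1r.
have -> : 1%:M + (c%:C)%C *: diag_mx d = diag_mx (\row_j (1 + (c%:C)%C * d 0 j)).
  apply/matrixP => a b; rewrite !mxE; case: eqP => [->|_]; rewrite ?mulr1n ?mulr0n //.
  by rewrite mulr0 addr0.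
rewrite det_diag rmorph_prod; apply: eq_bigr => j _.
have [e _] := dR j; by rewrite mxE {1}e rmorphD rmorph1 rmorphM.
Qed.
End MxPart.

Lemma term_cvg (R : realType) (a b : R) : 0 < a -> 0 < b ->
  log2 (1 + rho * a) - log2 (1 + rho * b) @[rho --> +oo] --> log2 (a / b).
Proof.
move=> a0 b0.
have inv0 : rho^-1 @[rho --> +oo] --> (0:R).
  apply/gtr0_cvgV0; first by near=> rho.
  exact: cvg_id.
have g : (rho^-1 + a) / (rho^-1 + b) @[rho --> +oo] --> a / b.
  have ga : rho^-1 + a @[rho --> +oo] --> 0 + a by apply: @cvgD _ _ _ _ _ _ _ _ _ inv0 (@cvg_cst _ a _ _ _).
  have gb : rho^-1 + b @[rho --> +oo] --> 0 + b by apply: @cvgD _ _ _ _ _ _ _ _ _ inv0 (@cvg_cst _ b _ _ _).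
  rewrite add0r in ga; rewrite add0r in gb.
  exact: (@cvgM _ _ _ _ _ _ _ _ ga (@cvgV _ _ _ _ _ _ (lt0r_neq0 b0) gb)).
have lg : ln ((rho^-1 + a) / (rho^-1 + b)) @[rho --> +oo] --> ln (a / b).
  exact: (continuous_cvg _ (continuous_ln (divr_gt0 a0 b0)) g).
have lg2 : ln ((rho^-1 + a) / (rho^-1 + b)) / ln 2 @[rho --> +oo] --> ln (a / b) / ln 2.
  by apply: @cvgMr_tmp _ _ _ _ _ _ (ln 2)^-1 lg.
apply: cvg_trans lg2; apply: near_eq_cvg; near=> rho.
have r0 : 0 < rho by [].
rewrite /log2 -mulrBl; congr (_ * _).
rewrite -ln_div ?posrE; [|by rewrite ltr_pwDl // mulr_ge0 // ltW|by rewrite ltr_pwDl // mulr_ge0 // ltW].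
congr (ln _).
have ea : rho^-1 + a = rho^-1 * (1 + rho * a) by rewrite mulrDr mulr1 mulrA mulVf ?gt_eqF // mul1r.
have eb : rho^-1 + b = rho^-1 * (1 + rho * b) by rewrite mulrDr mulr1 mulrA mulVf ?gt_eqF // mul1r.
by rewrite ea eb invfM mulrACA mulfV ?mul1r // invr_eq0 gt_eqF.
Unshelve. all: by end_near.
Qed.

Lemma ln_prod (R : realType) (I : Type) (s : seq I) (f : I -> R) :
  (forall i, 0 < f i) -> ln (\prod_(i <- s) f i) = \sum_(i <- s) ln (f i).
Proof.
move=> fp; elim: s => [|i s IH]; first by rewrite !big_nil ln1.
rewrite !big_cons lnM ?IH // posrE //; apply: prodr_gt0 => j _; exact: fp.
Qed.

Theorem corollary1 (R : realType) (M K S : nat) (sigma2 EVM : R)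
  (H : 'I_S -> 'M[R[i]]_(M, K)) :
  (K <= M)%N -> (1 <= S)%N -> 0 < sigma2 -> 0 < EVM <= 1 ->
  (forall nu : 'I_S, \rank (H nu) = K) ->
  sum_rate H sigma2 EVM rho @[rho --> +oo] --> K%:R * log2 (EVM ^+ 2)^-1.
Proof.
move=> KM S1 s0 /andP[E0 E1] rk.
have /boolp.choice [r rP] : forall nu : 'I_S, exists r : 'I_K -> R,
    (forall j, 0 < r j) /\ forall c : R,
    \det (1%:M + (c%:C)%C *: (H nu *m ctrmx (H nu))) = ((\prod_j (1 + c * r j))%:C)%C.
  by move=> nu; exact: gram_det (rk nu).
have ldE nu c : 0 <= c -> log2det c (H nu) = \sum_j log2 (1 + c * r nu j).
  move=> c0; rewrite /log2det (proj2 (rP nu)) /= /log2 ln_prod ?mulr_suml //.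
  move=> j; rewrite ltr_pwDl // mulr_ge0 // ltW //; exact: (proj1 (rP nu)).
set L := log2 (EVM ^+ 2)^-1.
pose f nu j rho := log2 (1 + rho * (r nu j / sigma2)) - log2 (1 + rho * (EVM ^+ 2 * r nu j / sigma2)).
have tc nu j : f nu j rho @[rho --> +oo] --> L.
  have rp := proj1 (rP nu) j.
  have a0 : 0 < r nu j / sigma2 by rewrite divr_gt0.
  have b0 : 0 < EVM ^+ 2 * r nu j / sigma2 by rewrite divr_gt0 // mulr_gt0 // exprn_gt0.
  have := term_cvg a0 b0.
  have -> : r nu j / sigma2 / (EVM ^+ 2 * r nu j / sigma2) = (EVM ^+ 2)^-1.
    by field; rewrite !gt_eqF.
  by [].
have big : S%:R^-1 * (\sum_nu \sum_j f nu j rho) @[rho --> +oo] -->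
    S%:R^-1 * (\sum_(nu < S) \sum_(j < K) L).
  apply: cvgMl_tmp.
  apply: cvg_big; first exact: add_continuous.
  move=> nu _; apply: cvg_big; first exact: add_continuous.
  by move=> j _; exact: tc.
have -> : K%:R * L = S%:R^-1 * (\sum_(nu < S) \sum_(j < K) L).
  rewrite !sumr_const !card_ord -mulr_natr -mulr_natl.
  have SN : S%:R != 0 :> R by rewrite pnatr_eq0 -lt0n.
  by field.
apply: cvg_trans big; apply: near_eq_cvg; near=> rho.
have r0 : 0 < rho by [].
rewrite /sum_rate !big_distrr /= -sumrB; apply: eq_bigr => nu _.
have c1 : 0 <= rho / sigma2 by rewrite divr_ge0 ?ltW.
have c2 : 0 <= rho * EVM ^+ 2 / sigma2 by rewrite divr_ge0 ?mulr_ge0 ?exprn_ge0 ?ltW.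
rewrite (ldE _ _ c1) (ldE _ _ c2).
rewrite -mulrBr -sumrB; congr (_ * _); apply: eq_bigr => j _.
by rewrite /f; congr (log2 (1 + _) - log2 (1 + _)); ring.
Unshelve. all: by end_near.
Qed.
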